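(* Let $F$ be a dill map with diameter $\delta$ and local rule $f$. (1) If $M,M'\in\mathbb N$ are such that for every $u\in A^*$ and every $j\in\{0,\dots,|u|-1\}$, $d_L(f^*(D_j(u)),f^*(u))\le M+\frac{|f^*(u)|-|f^*(D_j(u))|}{2}$ and $d_L(f^*(D_j(u)),f^*(u))\le M'-\frac{|f^*(u)|-|f^*(D_j(u))|}{2}$, then $F$ is $\frac{M+M'}{\lfloor f\rfloor}$-Lipschitz with respect to $\mathfrak d_L$. (2) If $L>0$ and $x\in A^{\mathbb N}$ satisfies $|f(x_{[i,i+\delta)})|\ge L$ for every $i\in\mathbb N$, then for every $y\in A^{\mathbb N}$, $\mathfrak d_L(F(x),F(y))\le(2\delta-1)\frac{\lceil f\rceil}{L}\mathfrak d_L(x,y)$. In particular, if $\tau$ is a substitution and $x$ satisfies $|\tau(x_i)|\ge L$ for all $i$, then $\mathfrak d_L(\overline\tau(x),\overline\tau(y))\le\frac{\lceil\tau\rceil}{L}\mathfrak d_L(x,y)$ for every $y$. (3) $F$ is $(2\delta-1)\frac{\lceil f\rceil}{\lfloor f\rfloor}$-Lipschitz with respect to $\mathfrak d_L$; in particular every substitution $\tau$ yields a $\frac{\lceil\tau\rceil}{\lfloor\tau\rfloor}$-Lipschitz map $\overline\tau$ with respect to $\mathfrak d_L$.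
   Context: $A$ is a finite alphabet; $u_{[i,j)}=u_i\cdots u_{j-1}$. A dill map with diameter $\delta\ge1$ has local rule $f:A^\delta\to A^+$ and is $F(x)=f(x_{[0,\delta)})f(x_{[1,\delta+1)})\cdots$; $\lfloor f\rfloor=\min_{u\in A^\delta}|f(u)|$, $\lceil f\rceil=\max_{u\in A^\delta}|f(u)|$. $f^*(u)=f(u_{[0,\delta)})\cdots f(u_{[|u|-\delta,|u|)})$ if $|u|\ge\delta$, empty otherwise. $D_j(u)$ is $u$ with the letter at position $j$ deleted. A substitution is a nonerasing morphism $\tau:A^*\to A^*$ (a dill map with $\delta=1$), $\overline\tau(z)=\tau(z_0)\tau(z_1)\cdots$, $\lfloor\tau\rfloor=\min_a|\tau(a)|$, $\lceil\tau\rceil=\max_a|\tau(a)|$. The Levenshtein distance is $d_L(u,v)=\frac{|u|+|v|}{2}-\ell$, $\ell$ the length of a longest common subsequence. The Feldman pseudo-metric is $\mathfrak d_L(x,y)=\limsup_{l\to\infty}d_L(x_{[0,l)},y_{[0,l)})/l$. A map $G$ is $C$-Lipschitz w.r.t. $\mathfrak d_L$ if $\mathfrak d_L(G(x),G(y))\le C\,\mathfrak d_L(x,y)$ for all $x,y$. *)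

(* Defs.v *)
From mathcomp Require Import all_boot all_order all_algebra.
From mathcomp Require Import all_classical all_reals all_analysis.
Set Implicit Arguments. Unset Strict Implicit. Unset Printing Implicit Defensive.
Import Order.TTheory GRing.Theory Num.Theory.
Local Open Scope ring_scope.

Definition lcs (A : finType) (u v : seq A) : nat :=
  (\max_(i < (size u).+1 | [exists w : i.-tuple A, subseq w u && subseq w v]) i)%N.

Definition dLev (R : realType) (A : finType) (u v : seq A) : R :=
  ((size u + size v)%:R / 2 - (lcs u v)%:R).

Definition pref (A : Type) (x : nat -> A) (l : nat) : seq A := mkseq x l.

(* Feldman pseudo-metric: limsup_l d_L(x_[0,l), y_[0,l)) / l
   (the sequence lies in [0,1], so the real limsup is the right notion). *)
Definition feldman (R : realType) (A : finType) (x y : nat -> A) : R :=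
  limn_sup (fun l : nat => dLev R (pref x l) (pref y l) / l%:R).

Definition feldman_lipschitz (R : realType) (A : finType)
  (G : (nat -> A) -> (nat -> A)) (C : R) : Prop :=
  forall x y : nat -> A, feldman R (G x) (G y) <= C * feldman R x y.

Definition iwin (A : Type) (delta : nat) (x : nat -> A) (i : nat) : delta.-tuple A :=
  [tuple x (i + k)%N | k < delta].

(* the dill map F(x) = f(x_[0,delta)) f(x_[1,delta+1)) ... ; its n-th letter lies
   in the concatenation of the first n+1 blocks since f is nonerasing. *)
Definition dill (A : Type) (delta : nat) (f : delta.-tuple A -> seq A)
  (x : nat -> A) : nat -> A :=
  fun n => nth (x 0%N) (flatten [seq f (iwin delta x i) | i <- iota 0 n.+1]) n.

Definition fstar (A : Type) (delta : nat) (f : delta.-tuple A -> seq A)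
  (u : seq A) : seq A :=
  match u with
  | [::] => [::]
  | a :: _ =>
    if (delta <= size u)%N then
      flatten [seq f [tuple nth a u (i + k)%N | k < delta]
              | i <- iota 0 (size u - delta).+1]
    else [::]
  end.

Definition del (A : Type) (j : nat) (u : seq A) : seq A := take j u ++ drop j.+1 u.

(* ceil f and floor f (min over the nonempty finite set A^delta when A is
   nonempty; the default value is irrelevant otherwise) *)
Definition fceil (A : finType) (delta : nat) (f : delta.-tuple A -> seq A) : nat :=
  (\max_(u : delta.-tuple A) size (f u))%N.
Definition ffloor (A : finType) (delta : nat) (f : delta.-tuple A -> seq A) : nat :=
  \big[minn/fceil f]_(u : delta.-tuple A) size (f u).

Definition subst_map (A : Type) (tau : A -> seq A) (x : nat -> A) : nat -> A :=
  fun n => nth (x 0%N) (flatten [seq tau (x i) | i <- iota 0 n.+1]) n.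
Definition tceil (A : finType) (tau : A -> seq A) : nat := (\max_(a : A) size (tau a))%N.
Definition tfloor (A : finType) (tau : A -> seq A) : nat :=
  \big[minn/tceil tau]_(a : A) size (tau a).

(* Main.v *)
Require Import Defs.
From mathcomp Require Import all_boot all_order all_algebra.
From mathcomp Require Import all_classical all_reals all_analysis.
From mathcomp Require Import lra zify ring.
Import Order.TTheory GRing.Theory Num.Theory.
Local Open Scope ring_scope.
Set Implicit Arguments. Unset Strict Implicit.

Section Lcs.
Variable A : finType.
Implicit Types u v w s : seq A.

Lemma lcs_ge w u v : subseq w u -> subseq w v -> (size w <= lcs u v)%N.
Proof.
move=> wu wv; have hs : (size w < (size u).+1)%N by rewrite ltnS size_subseq.
rewrite /lcs; apply: (@leq_trans (Ordinal hs)) => //.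
apply: (leq_bigmax_cond (Ordinal hs) (F := fun i : 'I_(size u).+1 => nat_of_ord i)).
by apply/existsP; exists (in_tuple w); rewrite wu wv.
Qed.

Lemma lcs_spec u v : exists w, [/\ size w = lcs u v, subseq w u & subseq w v].
Proof.
rewrite /lcs; apply: (big_ind (fun n => exists w, [/\ size w = n, subseq w u & subseq w v])).
- by exists [::]; rewrite !sub0seq.
- move=> x y [wx [<- ? ?]] [wy [<- ? ?]].
  case: (leqP (size wx) (size wy)) => h.
  + exists wy; split => //.
  + exists wx; split => //.
- move=> i /existsP[w /andP[wu wv]]; exists w; by rewrite size_tuple.
Qed.

Lemma lcs_le_l u v : (lcs u v <= size u)%N.
Proof. by have [w [<- wu _]] := lcs_spec u v; exact: size_subseq. Qed.

Lemma lcs_le_r u v : (lcs u v <= size v)%N.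
Proof. by have [w [<- _ wv]] := lcs_spec u v; exact: size_subseq. Qed.

Lemma lcsC u v : lcs u v = lcs v u.
Proof.
have [w [ew wu wv]] := lcs_spec u v; have [w' [ew' wu' wv']] := lcs_spec v u.
have h1 := lcs_ge wv wu; have h2 := lcs_ge wv' wu'; lia.
Qed.

Definition mand (m1 m2 : bitseq) := map (fun p => p.1 && p.2) (zip m1 m2).

Lemma mand_sub1 m1 m2 v : subseq (mask (mand m1 m2) v) (mask m1 v).
Proof.
elim: v m1 m2 => [|a v IH] [|b1 m1] [|b2 m2] //=; rewrite ?mask0 ?sub0seq //.
case: b1; case: b2 => /=; rewrite ?eqxx ?IH //.
by apply: subseq_trans (IH _ _) (subseq_cons _ _).
Qed.

Lemma mandC m1 m2 : mand m1 m2 = mand m2 m1.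
Proof.
by elim: m1 m2 => [|b1 m1 IH] [|b2 m2] //; move: (IH m2); rewrite /mand /= => ->; rewrite andbC.
Qed.

Lemma mand_count m1 m2 : size m1 = size m2 ->
  (count id m1 + count id m2 <= count id (mand m1 m2) + size m1)%N.
Proof.
elim: m1 m2 => [|b1 m1 IH] [|b2 m2] //= [] /IH h.
move: h; rewrite /mand /=.
by case: b1; case: b2 => /=; lia.
Qed.

Lemma size_mand m1 m2 : size m1 = size m2 -> size (mand m1 m2) = size m1.
Proof. by move=> h; rewrite size_map size_zip h minnn. Qed.

Lemma lcs_tri u v w : (lcs u v + lcs v w <= size v + lcs u w)%N.
Proof.
rewrite (lcsC u v).
have [s1 [<- /subseqP[m1 hm1 e1] s1u]] := lcs_spec v u.
have [s2 [<- /subseqP[m2 hm2 e2] s2w]] := lcs_spec v w.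
set t := mask (mand m1 m2) v.
have t1 : subseq t s1 by rewrite e1; exact: mand_sub1.
have t2 : subseq t s2 by rewrite e2 /t mandC; exact: mand_sub1.
have : (size t <= lcs u w)%N by apply: lcs_ge; [exact: subseq_trans s1u|exact: subseq_trans s2w].
rewrite /t size_mask ?size_mand ?hm1 ?hm2 // e1 e2 !size_mask //.
have := mand_count (m1:=m1) (m2:=m2); rewrite hm1 hm2 => /(_ erefl).
by move=> h1 h2; apply: (leq_trans h1); rewrite addnC leq_add2l.
Qed.

Lemma subseq_catP w u1 u2 : subseq w (u1 ++ u2) ->
  exists w1 w2, [/\ w = w1 ++ w2, subseq w1 u1 & subseq w2 u2].
Proof.
move=> /subseqP[m hm ->]; exists (mask (take (size u1) m) u1), (mask (drop (size u1) m) u2).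
rewrite -mask_cat ?cat_take_drop ?mask_subseq //.
by rewrite size_takel // hm size_cat leq_addr.
Qed.

Lemma lcs_take u v n : (lcs u v <= lcs u (take n v) + (size v - n))%N.
Proof.
have [w [<- wu]] := lcs_spec u v.
rewrite -{1}(cat_take_drop n v) => /subseq_catP[w1 [w2 [ew w1v w2v]]]; subst w.
have : (size w1 <= lcs u (take n v))%N.
  by apply: lcs_ge => //; apply: subseq_trans wu; exact: prefix_subseq.
have := size_subseq w2v; rewrite size_drop size_cat => h1 h2; exact: leq_add h2 h1.
Qed.

Lemma lcs_catr u v s : (lcs u v <= lcs u (v ++ s))%N.
Proof.
have [w [<- wu wv]] := lcs_spec u v; apply: lcs_ge => //.
exact: subseq_trans wv (prefix_subseq _ _).
Qed.

Lemma lcs_catl u v s : (lcs u v <= lcs (u ++ s) v)%N.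
Proof. by rewrite lcsC (lcsC (u ++ s)); exact: lcs_catr. Qed.

End Lcs.

Section Del.
Variable A : finType.
Lemma size_del j (u : seq A) : (j < size u)%N -> size (del j u) = (size u).-1.
Proof. by move=> h; rewrite /del size_cat size_take size_drop; case: ltnP => //; lia. Qed.

Lemma nth_del (d : A) j (u : seq A) i : (j < size u)%N ->
  nth d (del j u) i = if (i < j)%N then nth d u i else nth d u i.+1.
Proof.
move=> hj; rewrite /del nth_cat size_takel ?(ltnW hj) //.
case: ltnP => hi; first by rewrite nth_take.
rewrite nth_drop; congr nth; lia.
Qed.

Lemma flatten_subseq (T : eqType) (h : nat -> seq T) s t :
  subseq s t -> subseq (flatten (map h s)) (flatten (map h t)).
Proof.
elim: t s => [|b t IH] [|a s] //=; rewrite ?sub0seq //.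
case: eqP => [-> st|_ st]; first by apply: cat_subseq; [exact: subseq_refl|exact: IH].
apply: subseq_trans (IH _ st) (suffix_subseq _ _).
Qed.

Lemma size_flatten_filter (T : Type) (h : nat -> seq T) (P : pred nat) L :
  size (flatten (map h L)) =
  (size (flatten (map h (seq.filter P L))) + size (flatten (map h (seq.filter (predC P) L))))%N.
Proof.
elim: L => [|a L IH] //=; case: (P a) => /=; rewrite !size_cat IH; lia.
Qed.

Lemma size_flatten_le (T : Type) (h : nat -> seq T) c L :
  (forall i, size (h i) <= c)%N -> (size (flatten (map h L)) <= size L * c)%N.
Proof.
move=> hc; elim: L => [|a L IH] //=; rewrite size_cat mulSn.
exact: leq_add.
Qed.

Lemma del_sub (w u : seq A) : subseq w u -> (size w < size u)%N ->
  exists j, (j < size u)%N /\ subseq w (del j u).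
Proof.
elim: u w => [|a u IH] [|b w] //=.
- by move=> _ _; exists 0%N; rewrite sub0seq.
- case: (eqVneq b a) => [-> wu|ba wu] hs.
  + have [j [hj wd]] := IH w wu hs; exists j.+1; split => //.
    by rewrite /del /= eqxx.
  + by exists 0%N; split => //; rewrite /del /= drop0.
Qed.

End Del.

Section Dl.
Variables (A : finType) (delta : nat) (f : delta.-tuple A -> seq A).
Hypothesis hd : (0 < delta)%N.
Hypothesis hf : forall u, (0 < size (f u))%N.

Definition W (d : A) (u : seq A) i : delta.-tuple A := [tuple nth d u (i + k)%N | k < delta].
Definition fs d u := if (delta <= size u)%N then
  flatten [seq f (W d u i) | i <- iota 0 (size u - delta).+1] else [::].

Lemma fstarE d u : fstar f u = fs d u.
Proof.
case: u => [|a u]; first by rewrite /fs /=; case: leqP => //; lia.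
rewrite /fstar /fs; case: ifP => // hdu; congr flatten; apply/eq_in_map => i.
rewrite mem_iota add0n => /andP[_ hi]; congr f; apply: eq_mktuple => k.
apply: set_nth_default; move: hi hdu (ltn_ord k); rewrite /=; move: (i : nat) (nat_of_ord k) => i0 k0; clear; lia.
Qed.

Definition Bx (x : nat -> A) m := flatten [seq f (iwin delta x i) | i <- iota 0 m].

Lemma fstar_pref x m : fstar f (pref x (m + delta.-1)) = Bx x m.
Proof.
rewrite (fstarE (x 0%N)) /fs /pref size_mkseq.
case: m => [|m]; first by rewrite add0n; case: leqP => //; lia.
rewrite ifT; last lia.
have -> : ((m.+1 + delta.-1 - delta).+1 = m.+1)%N by lia.
rewrite /Bx; congr flatten; apply/eq_in_map => i; rewrite mem_iota add0n => /andP[_ hi].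
congr f; apply: eq_mktuple => k; rewrite nth_mkseq //; move: (ltn_ord k); lia.
Qed.

Lemma Bx_cat x m1 m2 : Bx x (m1 + m2) =
  Bx x m1 ++ flatten [seq f (iwin delta x i) | i <- iota m1 m2].
Proof. by rewrite /Bx iotaD map_cat flatten_cat. Qed.

Lemma size_BxS x m : size (Bx x m.+1) = (size (Bx x m) + size (f (iwin delta x m)))%N.
Proof. by rewrite -addn1 Bx_cat size_cat /= cats0. Qed.

Lemma size_Bx_ge x m : (m <= size (Bx x m))%N.
Proof. elim: m => [|m IH] //; rewrite size_BxS; have := hf (iwin delta x m); lia. Qed.

Lemma dillE x n : dill f x n = nth (x 0%N) (Bx x n.+1) n.
Proof. by []. Qed.

Lemma pref_dill x m : pref (dill f x) (size (Bx x m)) = Bx x m.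
Proof.
apply: (@eq_from_nth _ (x 0%N)); first by rewrite size_mkseq.
move=> n; rewrite size_mkseq => hn; rewrite nth_mkseq // dillE.
case: (leqP n.+1 m) => hm.
- rewrite -(subnKC hm) Bx_cat nth_cat; have := size_Bx_ge x n.+1.
  by case: ltnP => //; lia.
- rewrite -(subnKC (ltnW hm)) Bx_cat nth_cat hn //.
Qed.

Lemma pref_take (X : nat -> A) p N : (p <= N)%N -> pref X p = take p (pref X N).
Proof. by move=> h; rewrite /pref /mkseq -map_take take_iota; congr map; congr iota; lia. Qed.

Lemma size_pref (X : nat -> A) N : size (pref X N) = N.
Proof. exact: size_mkseq. Qed.

Lemma core x y m E N :
  (size (Bx x m) <= lcs (Bx x m) (Bx y m) + E)%N ->
  (size (Bx y m) <= lcs (Bx x m) (Bx y m) + E)%N ->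
  (size (Bx x m) <= N)%N ->
  (N <= lcs (pref (dill f x) N) (pref (dill f y) N) + E + (N - size (Bx x m)))%N.
Proof.
move=> hp hq hN.
set p := size (Bx x m) in hp hN *; set q := size (Bx y m) in hq.
have ex : pref (dill f x) N = Bx x m ++ drop p (pref (dill f x) N).
  have e1 : Bx x m = take p (pref (dill f x) N) by rewrite -pref_take // pref_dill.
  by rewrite {1}e1 cat_take_drop.
have h1 := lcs_catl (Bx x m) (pref (dill f y) N) (drop p (pref (dill f x) N)).
rewrite -ex in h1.
case: (leqP q N) => hqN.
- have ey : pref (dill f y) N = Bx y m ++ drop q (pref (dill f y) N).
    have e1 : Bx y m = take q (pref (dill f y) N) by rewrite -pref_take // pref_dill.
    by rewrite {1}e1 cat_take_drop.
  have h2 := lcs_catr (Bx x m) (Bx y m) (drop q (pref (dill f y) N)).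
  rewrite -ey in h2. lia.
- have ey : pref (dill f y) N = take N (Bx y m).
    by rewrite -[in RHS](pref_dill y m) -pref_take // ltnW.
  have h2 := lcs_take (Bx x m) (Bx y m) N.
  rewrite -ey in h2. lia.
Qed.

Lemma find_m x N : exists m, (size (Bx x m) <= N < size (Bx x m.+1))%N.
Proof.
elim: N => [|N [m /andP[h1 h2]]].
  by exists 0%N; rewrite size_BxS /= hf.
case: (ltnP N.+1 (size (Bx x m.+1))) => h3.
- by exists m; rewrite h3 andbT; lia.
- exists m.+1; rewrite h3 /= size_BxS; have := hf (iwin delta x m.+1); lia.
Qed.

Lemma size_fs_le d u c : (forall t, size (f t) <= c)%N ->
  (size (fs d u) <= (size u - delta).+1 * c)%N.
Proof.
move=> hc; rewrite /fs; case: ifP => // _.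
by have := size_flatten_le (h:=fun i => f (W d u i)) (iota 0 (size u - delta).+1) (fun i => hc _);
  rewrite size_iota.
Qed.

Lemma del_lcs d u j c : (forall t, size (f t) <= c)%N -> (j < size u)%N ->
  (size (fs d u) <= lcs (fs d (del j u)) (fs d u) + delta * c)%N /\
  (size (fs d (del j u)) <= lcs (fs d (del j u)) (fs d u) + delta.-1 * c)%N.
Proof.
move=> hc hj; set n := size u.
have hsd := size_del hj.
case: (ltnP n.-1 delta) => hdn.
  have -> : fs d (del j u) = [::] by rewrite /fs hsd ifF //; apply/negbTE; rewrite -ltnNge.
  split; last by [].
  apply: leq_trans (size_fs_le d u hc) _; rewrite -/n.
  have -> : (n - delta).+1 = 1%N by lia.
  rewrite mul1n; apply: leq_trans (leq_addl _ _); rewrite leq_pmull //.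
set m := (n - delta)%N.
pose keep i := ((i + delta <= j)%N || (j < i)%N).
pose keep' i := ((i + delta <= j)%N || (j <= i)%N).
pose g i := if (i < j)%N then i else i.+1.
set C := flatten [seq f (W d u i) | i <- seq.filter keep (iota 0 m.+1)].
have fsu : fs d u = flatten [seq f (W d u i) | i <- iota 0 m.+1].
  by rewrite /fs ifT //; lia.
have fsD : fs d (del j u) = flatten [seq f (W d (del j u) i) | i <- iota 0 m].
  rewrite /fs hsd ifT //; congr flatten; congr map; congr iota; rewrite -/n; lia.
have eL : seq.filter keep (iota 0 m.+1) = map g (seq.filter keep' (iota 0 m)).
  apply: (irr_sorted_eq ltn_trans (fun x => ltnn x)).
  - exact/sorted_filter/iota_ltn_sorted/ltn_trans.
  - rewrite sorted_map; apply: sub_sorted (sorted_filter ltn_trans _ (iota_ltn_sorted 0 m)).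
    by move=> a b /= hab; rewrite /g; case: (ltnP a j); case: (ltnP b j); lia.
  - move=> i; rewrite seq.mem_filter mem_iota.
    apply/idP/mapP.
    + move=> /andP[ki hi]; case: (ltnP i j) => hij.
      * exists i; last by rewrite /g hij.
        by rewrite seq.mem_filter mem_iota /keep'; move: ki hi; rewrite /keep /n /m; lia.
      * exists i.-1; last by rewrite /g; case: ltnP; move: ki hi; rewrite /keep; lia.
        by rewrite seq.mem_filter mem_iota /keep'; move: ki hi; rewrite /keep /n /m; lia.
    + move=> [i' ]; rewrite seq.mem_filter mem_iota => /andP[ki hi] ->.
      by rewrite /g; case: ltnP => h; move: ki hi; rewrite /keep /keep' /n /m; lia.
have eC : C = flatten [seq f (W d (del j u) i) | i <- seq.filter keep' (iota 0 m)].
  rewrite /C eL -map_comp; congr flatten; apply/eq_in_map => i.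
  rewrite seq.mem_filter mem_iota => /andP[ki hi] /=; congr f; apply: eq_mktuple => k.
  rewrite nth_del // /g; have := ltn_ord k.
  move: (nat_of_ord k) => k0 hk0; case: (ltnP i j) => hij.
  + by rewrite ifT //; move: ki; rewrite /keep'; lia.
  + by rewrite ifF; [congr nth; lia|apply/negbTE; rewrite -leqNgt; lia].
have lC : (size C <= lcs (fs d (del j u)) (fs d u))%N.
  apply: lcs_ge.
  - by rewrite eC fsD; apply: flatten_subseq; exact: seq.filter_subseq.
  - by rewrite fsu; apply: flatten_subseq; exact: seq.filter_subseq.
split.
- rewrite {1}fsu (size_flatten_filter _ keep) -/C.
  apply: leq_add; first exact: lC.
  apply: leq_trans (size_flatten_le _ (fun i => hc _)) _; apply: leq_mul => //.
  rewrite -(size_iota (j.+1 - delta) delta); apply: uniq_leq_size.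
    by rewrite filter_uniq // iota_uniq.
  move=> i; rewrite seq.mem_filter mem_iota /= /keep => /andP[ki hi]; rewrite mem_iota; lia.
- rewrite {1}fsD (size_flatten_filter _ keep') -eC.
  apply: leq_add; first exact: lC.
  apply: leq_trans (size_flatten_le _ (fun i => hc _)) _; apply: leq_mul => //.
  rewrite -(size_iota (j.+1 - delta) delta.-1); apply: uniq_leq_size.
    by rewrite filter_uniq // iota_uniq.
  by move=> i; rewrite seq.mem_filter mem_iota /= /keep' => /andP[ki hi]; rewrite mem_iota; lia.
Qed.

End Dl.

Local Open Scope classical_set_scope.
Section An.
Variable R : realType.

Lemma bnd01 (u : nat -> R) : (forall n, 0 <= u n <= 1) -> bounded_fun u.
Proof.
move=> h; rewrite /bounded_fun /bounded_near /=; near=> M => t _ /=.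
have /andP[h0 h1] := h t.
rewrite ger0_norm //; apply: (le_trans h1); near: M; exact: nbhs_pinfty_ge.
Unshelve. all: end_near. Qed.

Lemma lsup_le (u : nat -> R) b : (forall n, 0 <= u n <= 1) ->
  (forall e, 0 < e -> exists n0, forall n, (n0 <= n)%N -> u n <= b + e) ->
  limn_sup u <= b.
Proof.
move=> h H; rewrite limn_supE; last exact: bnd01.
have ub : has_ubound (range u).
  by exists 1 => _ [n _ <-]; have /andP[] := h n.
have lb : has_lbound (range (sups u)) by apply: bounded_fun_has_lbound_sups; exact: bnd01.
apply/ler_addgt0Pr => e e0; have [n0 Hn0] := H e e0.
apply: (@le_trans _ _ (sups u n0)); first by apply: ge_inf => //; exists n0.
rewrite /sups /=; apply: ge_sup; first by exists (u n0); exists n0 => /=.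
by move=> _ [k /= hk <-]; exact: Hn0.
Qed.

Lemma lsup_ev (u : nat -> R) e : (forall n, 0 <= u n <= 1) -> 0 < e ->
  exists n0, forall n, (n0 <= n)%N -> u n <= limn_sup u + e.
Proof.
move=> h e0; rewrite limn_supE; last exact: bnd01.
have ub : has_ubound (range u).
  by exists 1 => _ [n _ <-]; have /andP[] := h n.
have : inf (range (sups u)) < inf (range (sups u)) + e by rewrite ltrDl.
move=> /inf_lt -[]; first by exists (sups u 0%N); exists 0%N.
move=> _ [n0 _ <-] hn0; exists n0 => n hn.
apply: le_trans (ltW hn0).
by apply: (ub_le_sup (has_ubound_sdrop ub n0)); exists n.
Qed.

End An.
Local Close Scope classical_set_scope.


Section Real.
Variable R : realType.
Variable A : finType.

Lemma dLevE (u v : seq A) : dLev R u v =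
  ((size u)%:R + (size v)%:R) / 2 - (lcs u v)%:R.
Proof. by rewrite /dLev natrD. Qed.

Lemma dLev_sym (u v : seq A) : dLev R u v = dLev R v u.
Proof. by rewrite !dLevE lcsC (addrC (size u)%:R). Qed.

Lemma dLev_tri (a b c : seq A) : dLev R a c <= dLev R a b + dLev R b c.
Proof.
rewrite !dLevE; have := lcs_tri a b c; rewrite -(ler_nat R) !natrD => h; lra.
Qed.

Lemma dLev_refl (a : seq A) : dLev R a a = 0.
Proof.
rewrite dLevE; have -> : lcs a a = size a.
  by apply/eqP; rewrite eqn_leq lcs_le_l lcs_ge.
lra.
Qed.

Lemma nat_le (m n : nat) : (m <= n)%N -> (m%:R <= n%:R :> R).
Proof. by rewrite ler_nat. Qed.

Variables (delta : nat) (f : delta.-tuple A -> seq A).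

Lemma chain (M M' : nat)
  (H : forall (u : seq A) (j : nat), (j < size u)%N ->
        dLev R (fstar f (del j u)) (fstar f u) <=
          M%:R + ((size (fstar f u))%:R - (size (fstar f (del j u)))%:R) / 2 /\
        dLev R (fstar f (del j u)) (fstar f u) <=
          M'%:R - ((size (fstar f u))%:R - (size (fstar f (del j u)))%:R) / 2) k :
  forall w u, size u = (size w + k)%N -> subseq w u ->
  dLev R (fstar f w) (fstar f u) <=
     (k * M)%:R + ((size (fstar f u))%:R - (size (fstar f w))%:R) / 2 /\
  dLev R (fstar f w) (fstar f u) <=
     (k * M')%:R - ((size (fstar f u))%:R - (size (fstar f w))%:R) / 2.
Proof.
elim: k => [|k IH] w u hs wu.
  have : w = u.
    by apply/eqP; rewrite -(size_subseq_leqif wu).2 hs addn0.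
  by move=> ->; rewrite dLev_refl !mul0n subrr mul0r addr0 subr0.
have [j [hj wd]] := del_sub wu (ltac:(by rewrite hs addnS ltnS leq_addr)).
have hsd := size_del hj.
have [h1 h2] := IH w (del j u) (ltac:(by rewrite hsd hs addnS)) wd.
have [h3 h4] := H u j hj.
have t := dLev_tri (fstar f w) (fstar f (del j u)) (fstar f u).
rewrite !mulSn !natrD; split; lra.
Qed.

Lemma bnd_dLev (X Y : nat -> A) N : 0 <= dLev R (pref X N) (pref Y N) / N%:R <= 1.
Proof.
rewrite dLevE !size_pref; have hl := nat_le (lcs_le_l (pref X N) (pref Y N)).
rewrite size_pref in hl.
have h0 := nat_le (leq0n (lcs (pref X N) (pref Y N))).
case: N hl h0 => [|N] hl h0; first by rewrite invr0 mulr0 lexx ler01.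
have Np : 0 < N.+1%:R :> R by rewrite ltr0n.
apply/andP; split; first by apply: divr_ge0; lra.
by rewrite ler_pdivrMr // mul1r; lra.
Qed.

Lemma real_step (K0 L t s e1 e D Nr lr mr dr c B: R) : 0 <= K0 -> 0 < L -> 0 <= t -> 0 < Nr -> t = s + e1 -> K0 * e1 <= e/2 * L -> B = K0*t*dr + c -> 2*B <= e * Nr ->  D <= K0 * (t * lr) + c -> lr <= mr + dr -> mr * L <= Nr -> D <= (K0 / L * s + e) * Nr.
Proof.
move=> K0p Lp tp Np et hke eB hB hD hl hm.
have h1 : K0 * t * lr <= K0 * t * mr + K0 * t * dr.
  by rewrite -mulrDr; apply: ler_wpM2l => //; apply: mulr_ge0.
have h2 : K0 * t * mr * L <= K0 * t * Nr.
  by rewrite -mulrA; apply: ler_wpM2l => //; apply: mulr_ge0.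
have h3 : K0 * t * mr <= K0 * t * Nr / L by rewrite ler_pdivlMr.
have h4 : K0 * t * Nr / L = K0 / L * s * Nr + K0 * e1 / L * Nr.
  by rewrite et; field; rewrite gt_eqF.
have h5 : K0 * e1 / L <= e / 2 by rewrite ler_pdivrMr.
have h6 : K0 * e1 / L * Nr <= e / 2 * Nr by rewrite ler_pM2r.
rewrite mulrA in hD.
lra.
Qed.


Lemma size_Bx_le (hd : (0 < delta)%N) x m c : (forall t, size (f t) <= c)%N ->
  (size (Bx f x m) <= m * c)%N.
Proof.
move=> hc; elim: m => [|m IH] //; rewrite -addn1 Bx_cat size_cat /= cats0 mulnDl mul1n.
exact: leq_add.
Qed.

Lemma size_Bx_geL x m (L : R) : (forall i, L <= (size (f (iwin delta x i)))%:R) ->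
  m%:R * L <= (size (Bx f x m))%:R.
Proof.
move=> hx; elim: m => [|m IH]; first by rewrite mul0r.
rewrite -addn1 Bx_cat size_cat /= cats0 !natrD mulrDl mul1r.
exact: lerD.
Qed.

Lemma gen (hd : (0 < delta)%N) (hf : forall u, (0 < size (f u))%N)
  (c : nat) (hc : forall t, (size (f t) <= c)%N) (M M' : nat)
  (H : forall (u : seq A) (j : nat), (j < size u)%N ->
        dLev R (fstar f (del j u)) (fstar f u) <=
          M%:R + ((size (fstar f u))%:R - (size (fstar f (del j u)))%:R) / 2 /\
        dLev R (fstar f (del j u)) (fstar f u) <=
          M'%:R - ((size (fstar f u))%:R - (size (fstar f (del j u)))%:R) / 2)
  (L : R) (hL : 0 < L) (x : nat -> A)
  (hx : forall i, L <= (size (f (iwin delta x i)))%:R) (y : nat -> A) :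
  feldman R (dill f x) (dill f y) <= (M + M')%:R / L * feldman R x y.
Proof.
have s1a : forall l, let k := (l - lcs (pref x l) (pref y l))%N in
   (size (fstar f (pref x l)) <= lcs (fstar f (pref x l)) (fstar f (pref y l)) + k * (M + M'))%N /\
   (size (fstar f (pref y l)) <= lcs (fstar f (pref x l)) (fstar f (pref y l)) + k * (M + M'))%N.
  move=> l k.
  have [w [ew wx wy]] := lcs_spec (pref x l) (pref y l).
  have hl := lcs_le_l (pref x l) (pref y l); rewrite size_pref in hl.
  have sx : size (pref x l) = (size w + k)%N by rewrite size_pref ew /k; lia.
  have sy : size (pref y l) = (size w + k)%N by rewrite size_pref ew /k; lia.
  have [c1 c2] := chain H sx wx.
  have [c3 c4] := chain H sy wy.
  set a := fstar f (pref x l) in c1 c2 *; set b := fstar f (pref y l) in c3 c4 *.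
  set z := fstar f w in c1 c2 c3 c4.
  have t := dLev_tri a z b; rewrite (dLev_sym a z) in t.
  move: t; rewrite (dLevE a b) => t.
  rewrite -!(ler_nat R) !natrD !mulnDr !natrD; split; lra.
have s1 : forall m N, (size (Bx f x m) <= N < size (Bx f x m.+1))%N ->
   (N <= lcs (pref (dill f x) N) (pref (dill f y) N)
      + (m + delta.-1 - lcs (pref x (m + delta.-1)) (pref y (m + delta.-1))) * (M + M') + c)%N.
  move=> m N /andP[h1 h2].
  have [a1 a2] := s1a (m + delta.-1)%N; rewrite !fstar_pref // in a1 a2.
  have := core hd hf a1 a2 h1.
  move: h2; rewrite size_BxS; have := hc (iwin delta x m); lia.
have cpos : (0 < c)%N by apply: leq_trans (hf (iwin delta x 0)) (hc _).
set K0 := (M + M')%:R.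
have K0p : 0 <= K0 by rewrite /K0 ler0n.
set s := feldman R x y.
rewrite {1}/feldman; apply: lsup_le; first by move=> N; exact: bnd_dLev.
move=> e e0.
set e1 := e / 2 * L / (K0 + 1).
have e1p : 0 < e1 by rewrite /e1 divr_gt0 ?mulr_gt0 ?divr_gt0 //; lra.
have [l0 hl0] := lsup_ev (u := fun l => dLev R (pref x l) (pref y l) / l%:R) (fun n => bnd_dLev x y n) e1p.
change (forall n, (l0 <= n)%N -> dLev R (pref x n) (pref y n) / n%:R <= s + e1) in hl0.
set t := s + e1.
have tp : 0 <= t.
  rewrite /t; have h1 := hl0 l0 (leqnn _); have /andP[h2 _] := bnd_dLev x y l0; lra.
set B := K0 * t * delta%:R + c%:R.
have Bp : 0 <= B by rewrite /B; apply: addr_ge0; [apply: mulr_ge0; [apply: mulr_ge0|]|]; rewrite ?ler0n.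
have [N1 hN1] : exists N1 : nat, 2 * B / e < N1%:R by exists (Num.truncn (2 * B / e)).+1; exact: truncnS_gt.
exists (maxn N1 (l0.+2 * c)) => N; rewrite geq_max => /andP[hN1' hNc].
have [m hm] := find_m hd hf x N.
have mge : (l0.+1 <= m)%N.
  move: hm => /andP[_ h2]; have := size_Bx_le hd x m.+1 hc.
  move=> h3; have h4 : (l0.+2 * c < m.+1 * c)%N by apply: leq_ltn_trans hNc (leq_trans h2 h3).
  by move: h4; rewrite ltn_pmul2r // ltnS => /ltnW.
set l := (m + delta.-1)%N.
have ll0 : (l0 <= l)%N by rewrite /l; lia.
have lpos : (0 < l)%N by rewrite /l; lia.
have Hn := s1 m N hm.
have Npos : 0 < N%:R :> R.
  rewrite ltr0n; apply: (leq_trans _ hN1'); rewrite -(ltr_nat R); apply: le_lt_trans hN1.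
  by apply: divr_ge0; lra.
have hD : dLev R (pref (dill f x) N) (pref (dill f y) N) <=
          K0 * dLev R (pref x l) (pref y l) + c%:R.
  have hll := lcs_le_l (pref x l) (pref y l); rewrite size_pref in hll.
  set L1 := lcs (pref x l) (pref y l) in hll *.
  set LN := lcs (pref (dill f x) N) (pref (dill f y) N).
  have Hn' : (N <= LN + (l - L1) * (M + M') + c)%N := Hn.
  have key : (N%:R : R) <= LN%:R + (l - L1)%:R * K0 + c%:R.
    by rewrite /K0 -natrM -!natrD ler_nat.
  rewrite natrB // in key.
  have eN : dLev R (pref (dill f x) N) (pref (dill f y) N) = N%:R - LN%:R.
    rewrite dLevE !size_pref -/LN; lra.
  have el : dLev R (pref x l) (pref y l) = l%:R - L1%:R.
    rewrite dLevE !size_pref -/L1; lra.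
  rewrite eN el; lra.
have hdl : dLev R (pref x l) (pref y l) <= t * l%:R.
  by rewrite -ler_pdivrMr ?ltr0n //; apply: hl0.
have hlr : l%:R <= m%:R + delta%:R :> R by rewrite -natrD ler_nat /l; lia.
have hmL : m%:R * L <= N%:R.
  apply: le_trans (size_Bx_geL m hx) _; rewrite ler_nat; by case/andP: hm.
have hke : K0 * e1 <= e / 2 * L.
  rewrite /e1 mulrA ler_pdivrMr; last lra.
  have : 0 <= e / 2 * L by apply: mulr_ge0; lra.
  nra.
have h2B : 2 * B <= e * N%:R.
  move: hN1; rewrite ltr_pdivrMr // => /ltW h; apply: le_trans h _; rewrite mulrC ler_wpM2l ?ler_nat //; lra.
rewrite ler_pdivrMr //.
apply: (real_step K0p hL tp Npos (erefl t) hke (erefl B) h2B _ hlr hmL).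
apply: le_trans hD _; rewrite lerD2r; exact: ler_wpM2l.
Qed.

End Real.

Lemma bigmin_le (I : finType) (F : I -> nat) x t : (\big[minn/x]_(i : I) F i <= F t)%N.
Proof.
move: (mem_index_enum t); rewrite unlock /=; elim: (index_enum I) => [|a r IH] //.
rewrite inE => /orP[/eqP->|/IH h] /=; first exact: geq_minl.
exact: leq_trans (geq_minr _ _) h.
Qed.

Lemma bigmin_pos (I : finType) (F : I -> nat) x : (0 < x)%N -> (forall i, 0 < F i)%N ->
  (0 < \big[minn/x]_(i : I) F i)%N.
Proof.
move=> hx hF; apply: (big_ind (fun v => 0 < v)%N) => //.
by move=> a b ha hb; rewrite leq_min ha hb.
Qed.

Section Final.
Variable R : realType.
Variable A : finType.

Lemma part2 (delta : nat) (f : delta.-tuple A -> seq A) (hd : (0 < delta)%N)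
  (hf : forall u, (0 < size (f u))%N) (c : nat) (hc : forall t, (size (f t) <= c)%N)
  (L : R) (hL : 0 < L) (x : nat -> A)
  (hx : forall i, L <= (size (f (iwin delta x i)))%:R) (y : nat -> A) :
  feldman R (dill f x) (dill f y) <= (delta.-1 * c + delta * c)%:R / L * feldman R x y.
Proof.
apply: (gen hd hf hc _ hL hx) => u j hj.
rewrite !(fstarE f hd (x 0%N)).
have [h1 h2] := del_lcs hd (x 0%N) hc hj.
rewrite dLevE.
move: h1 h2; rewrite -!(ler_nat R) !natrD => h1 h2; split; lra.
Qed.

End Final.

Unset Implicit Arguments.

Theorem corollaryc (R : realType) (A : finType) (delta : nat)
  (f : delta.-tuple A -> seq A)
  (hdelta : (0 < delta)%N) (hf : forall u, (0 < size (f u))%N) :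
  (* (1) *)
  (forall M M' : nat,
     (forall (u : seq A) (j : nat), (j < size u)%N ->
        dLev R (fstar f (del j u)) (fstar f u) <=
          M%:R + ((size (fstar f u))%:R - (size (fstar f (del j u)))%:R) / 2 /\
        dLev R (fstar f (del j u)) (fstar f u) <=
          M'%:R - ((size (fstar f u))%:R - (size (fstar f (del j u)))%:R) / 2) ->
     feldman_lipschitz (R := R) (dill f) ((M + M')%:R / (ffloor f)%:R))
  /\
  (* (2) *)
  (forall (L : R), 0 < L ->
     (forall x : nat -> A, (forall i, L <= (size (f (iwin delta x i)))%:R) ->
        forall y : nat -> A,
          feldman R (dill f x) (dill f y) <=
            (2 * delta - 1)%N%:R * ((fceil f)%:R / L) * feldman R x y)
     /\
     (forall (tau : A -> seq A), (forall a, (0 < size (tau a))%N) ->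
        forall x : nat -> A, (forall i, L <= (size (tau (x i)))%:R) ->
        forall y : nat -> A,
          feldman R (subst_map tau x) (subst_map tau y) <=
            (tceil tau)%:R / L * feldman R x y))
  /\
  (* (3) *)
  (feldman_lipschitz (R := R) (dill f)
     ((2 * delta - 1)%N%:R * ((fceil f)%:R / (ffloor f)%:R))
   /\
   forall (tau : A -> seq A), (forall a, (0 < size (tau a))%N) ->
     feldman_lipschitz (R := R) (subst_map tau) ((tceil tau)%:R / (tfloor tau)%:R)).
Proof.
have fc : forall t, (size (f t) <= fceil f)%N by move=> t; exact: (leq_bigmax t).
have floor_le : forall t, (ffloor f <= size (f t))%N by move=> t; exact: bigmin_le.
have floor_pos : forall x : nat -> A, (0 < ffloor f)%N.
  by move=> x; apply: bigmin_pos => //; apply: leq_trans (hf (iwin delta x 0)) (fc _).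
have P2 : forall L : R, 0 < L -> forall x : nat -> A,
    (forall i, L <= (size (f (iwin delta x i)))%:R) -> forall y : nat -> A,
    feldman R (dill f x) (dill f y) <=
      (2 * delta - 1)%N%:R * ((fceil f)%:R / L) * feldman R x y.
  move=> L hL x hx y; have := part2 hdelta hf fc hL hx y.
  have -> : (delta.-1 * fceil f + delta * fceil f = (2 * delta - 1) * fceil f)%N.
    by rewrite -mulnDl; congr (_ * _); lia.
  by rewrite mulrA -natrM.
have P2t : forall L : R, 0 < L -> forall tau : A -> seq A, (forall a, (0 < size (tau a))%N) ->
    forall x : nat -> A, (forall i, L <= (size (tau (x i)))%:R) -> forall y : nat -> A,
    feldman R (subst_map tau x) (subst_map tau y) <= (tceil tau)%:R / L * feldman R x y.
  move=> L hL tau ht x hx y.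
  pose f' := fun t : 1.-tuple A => tau (thead t).
  have ef : forall (z : nat -> A) i, f' (iwin 1 z i) = tau (z i).
    by move=> z i; rewrite /f' /thead /iwin tnth_mktuple addn0.
  have e : forall z, subst_map tau z = dill f' z.
    move=> z; apply: boolp.funext => n; rewrite /subst_map /dill; congr nth; congr flatten.
    by apply/eq_map => i; rewrite ef.
  rewrite !e.
  have hf' : forall t, (0 < size (f' t))%N by move=> t; exact: ht.
  have hc' : forall t, (size (f' t) <= tceil tau)%N by move=> t; exact: (leq_bigmax (thead t)).
  have hx' : forall i, L <= (size (f' (iwin 1 x i)))%:R by move=> i; rewrite ef.
  have := part2 (ltnSn 0) hf' hc' hL hx' y.
  by rewrite mul0n mul1n add0n.
split; [|split; [|split]].
- move=> M M' H x y.
  apply: (gen hdelta hf fc H _ _ y); first by rewrite ltr0n; exact: floor_pos x.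
  by move=> i; rewrite ler_nat.
- split; first exact: P2.
  exact: P2t.
- move=> x y; apply: P2; first by rewrite ltr0n; exact: floor_pos x.
  by move=> i; rewrite ler_nat.
- move=> tau ht x y; apply: P2t => //.
    rewrite ltr0n; apply: bigmin_pos => [|a]; last exact: ht.
    exact: leq_trans (ht (x 0%N)) (leq_bigmax (x 0%N)).
  by move=> i; rewrite ler_nat; exact: bigmin_le.
Qed.
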